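(* Let $\mathbb{K}\in\{\mathbb{R},\mathbb{C}\}$ and let $\mathcal{X}$ be a topological $\mathbb{K}$-vector space whose topological dual $\mathcal{X}^{\ast}$ separates the points of $\mathcal{X}$. Then the map $\overline{\mathrm{co}}:\mathbf{F}(\mathcal{X}^{\ast})\to\mathbf{CF}(\mathcal{X}^{\ast})$, $F\mapsto\overline{\mathrm{co}}F$, is surjective and continuous, both spaces being endowed with the weak*-Hausdorff hypertopology.
   Context: Topological vector spaces are Hausdorff. $\mathcal{X}^{\ast}$ carries the weak* topology. $\mathbf{F}(\mathcal{X}^{\ast})$ is the set of nonempty weak*-closed subsets of $\mathcal{X}^{\ast}$, $\mathbf{CF}(\mathcal{X}^{\ast})$ the subset of convex ones, and $\overline{\mathrm{co}}F$ is the weak*-closure of the convex hull of $F$. The weak*-Hausdorff hypertopology on $\mathbf{F}(\mathcal{X}^{\ast})$ (and its subspaces) is the topology generated by the extended pseudometrics $d_H^{(A)}(F,\tilde F)=\max\{\sup_{\sigma\in F}\inf_{\tilde\sigma\in\tilde F}|(\sigma-\tilde\sigma)(A)|,\ \sup_{\tilde\sigma\in\tilde F}\inf_{\sigma\in F}|(\sigma-\tilde\sigma)(A)|\}\in[0,\infty]$, $A\in\mathcal{X}$. *)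

(* Defs.v *)
From HB Require Import structures.
From mathcomp Require Import all_boot all_order all_algebra.
From mathcomp Require Import all_classical all_reals all_analysis.
From mathcomp Require Import complex.

Set Implicit Arguments.
Unset Strict Implicit.
Unset Printing Implicit Defensive.

Import Order.TTheory GRing.Theory Num.Theory.
Import numFieldTopology.Exports.

Local Open Scope classical_set_scope.
Local Open Scope ring_scope.

Section Hyper.
(* Scalars K (a numFieldType with its norm topology), a realType R in which
   the absolute value |.| of K is read (abs : K -> R). *)
Variables (R : realType) (K : numFieldType) (abs : K -> R).
Variable (X : topologicalLmodType K).

Definition dual : set (X -> K) :=
  [set f | (forall (a : K) (x y : X), f (a *: x + y) = a * f x + f y)
           /\ continuous f].

Definition dual_separates : Prop :=
  forall x y : X, x <> y -> exists2 f, dual f & f x <> f y.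

(* Weak* topology on X^star = subspace topology of X^star inside {ptws X -> K}
   (pointwise convergence = initial topology of the evaluations). *)
Definition wstar_closure (F : set (X -> K)) : set (X -> K) :=
  dual `&` @closure {ptws X -> K} F.

Definition wstar_closed (F : set (X -> K)) : Prop :=
  F `<=` dual /\ wstar_closure F `<=` F.

Definition conv_hull (F : set (X -> K)) : set (X -> K) :=
  [set g | exists n (l : 'I_n -> K) (s : 'I_n -> X -> K),
      [/\ forall i, 0 <= l i, \sum_(i < n) l i = 1, forall i, F (s i)
        & forall A, g A = \sum_(i < n) l i * s i A]].

Definition clco (F : set (X -> K)) : set (X -> K) :=
  wstar_closure (conv_hull F).

Definition convex_fset (F : set (X -> K)) : Prop :=
  forall f g (t : K), F f -> F g -> 0 <= t -> t <= 1 ->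
    F (fun A => t * f A + (1 - t) * g A).

Definition FF : set (set (X -> K)) :=
  [set F | F !=set0 /\ wstar_closed F].
Definition CFF : set (set (X -> K)) :=
  [set F | FF F /\ convex_fset F].

Definition hexcess (A : X) (F G : set (X -> K)) : \bar R :=
  ereal_sup [set ereal_inf [set ((abs (s A - t A))%:E)%E | t in G] | s in F].

Definition dH (A : X) (F G : set (X -> K)) : \bar R :=
  maxe (hexcess A F G) (hexcess A G F).

(* Open sets of the weak*-Hausdorff hypertopology on a family S of sets:
   topology generated by the family (dH A)_{A in X} restricted to S. *)
Definition hyper_open (S U : set (set (X -> K))) : Prop :=
  U `<=` S /\
  forall F, U F -> exists n (As : 'I_n -> X) (e : R), 0 < e /\
    forall G, S G -> (forall i, (dH (As i) F G < e%:E)%E) -> U G.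

Definition prop312 : Prop :=
  dual_separates -> hausdorff_space X ->
  [/\ (forall F, FF F -> CFF (clco F)),
      (forall C, CFF C -> exists2 F, FF F & clco F = C) &
      (forall V, hyper_open CFF V -> hyper_open FF (FF `&` (clco @^-1` V)))].

End Hyper.

(* Main.v *)
Require Import Defs.
From HB Require Import structures.
From mathcomp Require Import all_boot all_order all_algebra.
From mathcomp Require Import all_classical all_reals all_analysis.
From mathcomp Require Import complex.
From mathcomp Require Import ring lra.
Import Order.TTheory GRing.Theory Num.Theory.
Import numFieldTopology.Exports numFieldNormedType.Exports.
Local Open Scope ring_scope.
Local Open Scope classical_set_scope.


Section Gen.
Context {K : numFieldType} {X : topologicalLmodType K}.

Lemma eval_cvg (f : {ptws X -> K}) x : (fun u : X -> K => u x) @ f --> f x.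
Proof.
have := @pointwise_cvgP X K (nbhs f) f _.
move=> [H _]. apply: H. exact: cvg_id.
Qed.

Definition aff (t : K) (g : X -> K) (f : {ptws X -> K}) : {ptws X -> K} :=
  fun x => t * f x + g x.

Lemma aff_cont (t : K) (g : X -> K) : continuous (aff t g).
Proof.
move=> f.
have FF := @fmap_filter _ _ (aff t g) (nbhs f) (nbhs_filter f).
have [_ H] := @pointwise_cvgP X K _ (aff t g f) FF.
apply: H => x.
have e := eval_cvg f x.
have e2 := @cvgMl_tmp K _ (nbhs f) (nbhs_filter f) (fun u : X -> K => u x) t (f x) e.
have e3 := @cvgD K _ _ (nbhs f) (nbhs_filter f) (fun u : X -> K => t * u x) (fun _ => g x) _ _ e2 (@cvg_cst _ (g x) _ (nbhs f) (nbhs_filter f)).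
exact: e3.
Qed.

Definition combo n (l : 'I_n -> K) (s : 'I_n -> X -> K) : X -> K :=
  fun A => \sum_(i < n) l i * s i A.
Arguments combo {n}.

Lemma sum_cont n (l : 'I_n -> K) (s : 'I_n -> X -> K) :
  (forall i, continuous (s i)) -> continuous (combo l s).
Proof.
elim: n l s => [|n IH] l s hs.
  have -> : combo l s = fun _ => 0 by apply: funext => x; rewrite /combo big_ord0.
  exact: cst_continuous.
have -> : combo l s = fun x => combo (fun i => l (widen_ord (leqnSn n) i))
      (fun i => s (widen_ord (leqnSn n) i)) x + l ord_max * s ord_max x.
  by apply: funext => x; rewrite /combo big_ord_recr.
move=> x.
apply: (@cvgD K _ _ (nbhs x) (nbhs_filter x)).
  exact: IH.
apply: (@cvgMl_tmp K _ (nbhs x) (nbhs_filter x)).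
exact: hs.
Qed.

Lemma dual_combo n (l : 'I_n -> K) (s : 'I_n -> X -> K) :
  (forall i, dual (s i)) -> dual (combo l s).
Proof.
move=> hs; split; last by apply: sum_cont => i; case: (hs i).
move=> a x y; rewrite /combo.
have E : forall i, l i * s i (a *: x + y) = a * (l i * s i x) + l i * s i y.
  by move=> i; case: (hs i) => -> _; ring.
by rewrite (eq_bigr _ (fun i _ => E i)) big_split /= -mulr_sumr.
Qed.

Lemma conv_sub_dual (F : set (X -> K)) : F `<=` @dual K X -> conv_hull F `<=` @dual K X.
Proof.
move=> FD g [n [l [s [l0 l1 Fs gE]]]].
have -> : g = combo l s by apply: funext.
by apply: dual_combo => i; exact: FD.
Qed.

Lemma dual_convex : convex_fset (@dual K X).
Proof.
move=> f g t [fl fc] [gl gc] _ _; split.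
  by move=> a x y; rewrite fl gl; ring.
move=> x.
apply: (@cvgD K _ _ (nbhs x) (nbhs_filter x)).
  apply: (@cvgMl_tmp K _ (nbhs x) (nbhs_filter x)); exact: fc.
apply: (@cvgMl_tmp K _ (nbhs x) (nbhs_filter x)); exact: gc.
Qed.

Lemma conv_convex (F : set (X -> K)) : convex_fset (conv_hull F).
Proof.
move=> f g t [n [l [s [l0 l1 Fs fE]]]] [m [l' [s' [l0' l1' Fs' gE]]]] t0 t1.
pose L (i : 'I_(n + m)) := match fintype.split i with inl j => t * l j | inr j => (1 - t) * l' j end.
pose S (i : 'I_(n + m)) := match fintype.split i with inl j => s j | inr j => s' j end.
have sl : forall i, fintype.split (lshift m i) = inl i := fun i => unsplitK (inl i).
have sr : forall i, fintype.split (rshift n i) = inr i := fun i => unsplitK (inr i).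
exists (n + m), L, S; split.
- move=> i; rewrite /L; case: (fintype.split i) => j.
    by rewrite mulr_ge0.
  by rewrite mulr_ge0 // subr_ge0.
- rewrite big_split_ord /L /=.
  under eq_bigr do rewrite sl.
  under [X in _ + X]eq_bigr do rewrite sr.
  by rewrite -!mulr_sumr l1 l1' !mulr1 addrC subrK.
- by move=> i; rewrite /S; case: (fintype.split i).
- move=> A; rewrite big_split_ord /L /S /=.
  under eq_bigr do rewrite sl.
  under [X in _ = _ + X]eq_bigr do rewrite sr.
  rewrite fE gE !mulr_sumr; congr (_ + _); apply: eq_bigr => i _; by rewrite mulrA.
Qed.

Lemma closure_convex (C : set {ptws X -> K}) :
  convex_fset C -> convex_fset (closure C).
Proof.
move=> cC f g t Cf Cg t0 t1.
have step1 : forall g0, C g0 -> closure C (fun A => t * f A + (1 - t) * g0 A).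
  move=> g0 Cg0.
  pose S := aff t (fun A => (1 - t) * g0 A) @^-1` closure C.
  have cS : closed S.
    by apply: preimage_closed; [move=> y _; exact: aff_cont | exact: closed_closure].
  have CS : C `<=` S.
    move=> h Ch; rewrite /S /aff /=; apply: subset_closure; exact: cC.
  have : closure C `<=` S.
    by move=> h /(closureS CS); rewrite -(closure_id S).1.
  by move/(_ f Cf).
pose T := aff (1 - t) (fun A => t * f A) @^-1` closure C.
have cT : closed T.
  by apply: preimage_closed; [move=> y _; exact: aff_cont | exact: closed_closure].
have CT : C `<=` T.
  move=> h Ch; rewrite /T /aff /=.
  have -> : (fun x => (1 - t) * h x + t * f x) = (fun A => t * f A + (1 - t) * h A).
    by apply: funext => x; rewrite addrC.
  exact: step1.
have : closure C `<=` T.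
  by move=> h /(closureS CT); rewrite -(closure_id T).1.
move/(_ g Cg); rewrite /T /aff /=.
have -> : (fun x => (1 - t) * g x + t * f x) = (fun A => t * f A + (1 - t) * g A).
  by apply: funext => x; rewrite addrC.
by [].
Qed.

Lemma conv_in_convex (C : set (X -> K)) : convex_fset C -> conv_hull C `<=` C.
Proof.
move=> cC g [n [l [s [l0 l1 Cs gE]]]].
have -> : g = combo l s by apply: funext.
elim: n l s l0 l1 Cs {gE} => [|n IH] l s l0 l1 Cs.
  by move: l1; rewrite big_ord0 => /eqP; rewrite eq_sym oner_eq0.
pose b := \sum_(i < n) l (widen_ord (leqnSn n) i).
have b0 : 0 <= b by apply: sumr_ge0 => i _.
have ab : l ord_max = 1 - b by rewrite -l1 big_ord_recr /= /b; ring.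
have b1 : b <= 1 by rewrite -subr_ge0 -ab.
have [bz | bnz] := eqVneq b 0.
  have lz : forall i, l (widen_ord (leqnSn n) i) = 0.
    move=> i; exact: (psumr_eq0P (fun i _ => l0 _) bz).
  have -> : combo l s = s ord_max.
    apply: funext => A; rewrite /combo big_ord_recr /= ab bz subr0 mul1r.
    by rewrite big1 ?add0r // => i _; rewrite lz mul0r.
  exact: Cs.
pose h := combo (fun i => l (widen_ord (leqnSn n) i) / b) (fun i => s (widen_ord (leqnSn n) i)).
have Ch : C h.
  apply: IH => //.
  - by move=> i; rewrite divr_ge0.
  - by rewrite -mulr_suml divff.
have -> : combo l s = fun A => b * h A + (1 - b) * s ord_max A.
  apply: funext => A; rewrite /combo /h /combo big_ord_recr /= ab mulr_sumr.
  congr (_ + _); apply: eq_bigr => i _.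
  by rewrite mulrA [b * _]mulrC divfK.
exact: cC.
Qed.

End Gen.
Section Clco.
Context {K : numFieldType} {X : topologicalLmodType K}.

Lemma sub_conv (F : set (X -> K)) : F `<=` conv_hull F.
Proof.
move=> f Ff; exists 1%N, (fun _ => 1), (fun _ => f); split => //.
- by rewrite big_ord1.
- by move=> A; rewrite big_ord1 mul1r.
Qed.

Lemma clco_CFF (F : set (X -> K)) : FF F -> CFF (clco F).
Proof.
move=> [[f Ff] [FD _]].
have sub : F `<=` clco F.
  move=> g Fg; split; first exact: FD.
  by apply: subset_closure; exact: sub_conv.
split; first split.
- by exists f; exact: sub.
- split; first by move=> g [].
  move=> g [Dg]; rewrite /clco /wstar_closure => Cg; split => //.
  have : @closure {ptws X -> K} (@dual K X `&` @closure {ptws X -> K} (conv_hull F)) `<=`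
         @closure {ptws X -> K} (conv_hull F).
    move=> h /(closureS (@subIsetr _ _ _)).
    by rewrite -(closure_id _).1 //; exact: closed_closure.
  exact.
- move=> g h t [Dg Cg] [Dh Ch] t0 t1; split.
    exact: dual_convex.
  exact: (@closure_convex K X (conv_hull F) (@conv_convex K X F) g h t Cg Ch t0 t1).
Qed.

Lemma clco_CFF_id (C : set (X -> K)) : CFF C -> clco C = C.
Proof.
move=> [[_ [CD Ccl]] cC]; apply/seteqP; split.
  move=> g [Dg Cg]; apply: Ccl; split => //.

  exact: (@closureS {ptws X -> K} _ _ (@conv_in_convex K X C cC) g Cg).
move=> g Cg; split; first exact: CD.
by apply: subset_closure; exact: sub_conv.
Qed.

End Clco.
Section Metric.
Variables (R : realType) (K : numFieldType) (abs : K -> R) (X : topologicalLmodType K)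
  (io : R -> K).
Hypotheses (iole : forall a b, (io a <= io b) = (a <= b))
  (iolt : forall a b, (io a < io b) = (a < b))
  (ioD : forall a b, io (a + b) = io a + io b)
  (io0 : io 0 = 0)
  (hn : forall x, `|x| = io (abs x)).

Lemma hex_le (A : X) (F G : set (X -> K)) : F `<=` @dual K X -> G `<=` @dual K X ->
  (hexcess abs A (clco F) (clco G) <= hexcess abs A F G)%E.
Proof.
move=> FD GD.
apply: ge_ereal_sup => _ [s [Ds Cs] <-].
have key : forall r : R, (hexcess abs A F G < r%:E)%E -> forall e : R, 0 < e ->
   (ereal_inf [set ((abs (s A - t A))%:E)%E | t in clco G] <= (r + e)%:E)%E.
  move=> r dr e e0.
  have ie0 : 0 < io e by rewrite -io0 iolt.
  have near : \forall u \near (s : {ptws X -> K}), `|s A - u A| < io e.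
    have := eval_cvg s A.
    by move/cvgrPdist_lt => /(_ (@nbhs_filter {ptws X -> K} s) (io e) ie0).
  have [s' [Cs' Hs']] := Cs _ near.
  case: Cs' => n [l [ss [l0 l1 Fss s'E]]].
  have : forall i, exists t, G t /\ abs (ss i A - t A) < r.
    move=> i.
    have : (ereal_inf [set ((abs (ss i A - t A))%:E)%E | t in G] < r%:E)%E.
      apply: le_lt_trans dr; apply: ereal_sup_ubound; by exists (ss i).
    by move/ereal_inf_lt => [_ [t Gt <-]]; rewrite lte_fin => h; exists t.
  move/choice => [tt Htt].
  pose t := @combo K X n l tt.
  have Ct : clco G t.
    split.
      by apply: dual_combo => i; apply: GD; exact: (Htt i).1.
    apply: subset_closure; exists n, l, tt; split => //.
    by move=> i; exact: (Htt i).1.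
  apply: ge_ereal_inf; exists ((abs (s A - t A))%:E)%E; first by exists t.
  rewrite lee_fin -iole ioD -hn.
  have E : s' A - t A = \sum_(i < n) l i * (ss i A - tt i A).
    by rewrite s'E /t /combo -sumrB; apply: eq_bigr => i _; rewrite mulrBr.
  have -> : s A - t A = (s A - s' A) + (s' A - t A) by ring.
  apply: le_trans (ler_normD _ _) _.
  rewrite [io r + io e]addrC; apply: lerD; first exact: ltW.
  rewrite E; apply: le_trans (ler_norm_sum _ _ _) _.
  apply: (@le_trans _ _ (\sum_(i < n) l i * io r)).
    apply: ler_sum => i _; rewrite normrM ger0_norm // ler_wpM2l // hn iole.
    exact: ltW (Htt i).2.
  by rewrite -mulr_suml l1 mul1r.
have main : forall r : R, (hexcess abs A F G < r%:E)%E ->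
   (ereal_inf [set ((abs (s A - t A))%:E)%E | t in clco G] <= r%:E)%E.
  by move=> r dr; apply/lee_addgt0Pr => e e0; exact: key.
move: main.
case: (hexcess abs A F G) => [r0| |] main.
- apply/lee_addgt0Pr => e e0; apply: main; by rewrite lte_fin ltrDl.
- exact: leey.
- move: main.
  case: (ereal_inf _) => [v| |] main //.
  + have := main (v - 1) (ltNyr _); rewrite lee_fin => h; exfalso; move: h; apply/negP; rewrite -ltNge; lra.
  + by have := main 0 (ltNyr _).
Qed.

Lemma dH_le (A : X) (F G : set (X -> K)) : F `<=` @dual K X -> G `<=` @dual K X ->
  (dH abs A (clco F) (clco G) <= dH abs A F G)%E.
Proof.
move=> FD GD; rewrite /dH ge_max; apply/andP; split.
  by rewrite le_max hex_le.
by rewrite le_max hex_le ?orbT.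
Qed.

Lemma gen312 : prop312 abs X.
Proof.
move=> _ _; split.
- exact: clco_CFF.
- move=> C CC; exists C; first by case: CC.
  exact: clco_CFF_id.
- move=> V [VC HV]; split; first by move=> ? [].
  move=> F [FFF VF].
  have [n [As [e [e0 He]]]] := HV _ VF.
  exists n, As, e; split => // G FFG Hd; split => //.
  apply: He; first exact: clco_CFF.
  move=> i; apply: le_lt_trans (Hd i).
  by apply: dH_le; [case: FFF => _ [] | case: FFG => _ []].
Qed.

End Metric.

Theorem proposition3p12 (R : realType) :
  (forall X : topologicalLmodType R,
      prop312 (fun x : R => `|x|) X) /\
  (forall X : topologicalLmodType R[i],
      prop312 (fun z : R[i] => complex.Re `|z|) X).
Proof.
split => X.
- by apply: (@gen312 R R _ X id).
- apply: (@gen312 R R[i] _ X (fun r => (r%:C)%C)).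
  + by move=> a b; exact: lecR.
  + by move=> a b; exact: ltcR.
  + by move=> a b; apply/eqP; rewrite eq_complex /= addr0 !eqxx.
  + by [].
  + by case.
Qed.
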